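(* Let $F$, $H$, $X$, $\Omega$, $Q$ and the sequences generated by the IneIREG method be as described in the context, and suppose $H$ is $\mu$-strongly monotone for some $\mu>0$. Suppose $\eta_k\equiv\eta>0$; $\lambda_k\in[\underline\lambda,\overline\lambda]$ for all $k\ge0$ with $0<\underline\lambda\le\overline\lambda<1/L$, $L:=L_F+\eta L_H$; and $\alpha_0\in[0,1]$ and $\alpha_{k+1}\le(1-\beta_k)\alpha_k$ for all $k\ge0$, where $\beta_k:=\big(\frac{1}{1-\lambda_k^2L^2}+\frac{1}{2\lambda_k\eta\mu}\big)^{-1}$. Define $p_k:=\big(\prod_{i=0}^k(1-\beta_i)\big)^{-1}$ for $k\ge0$, for $k\ge1$ $\Lambda_k:=\sum_{j=0}^{k-1}\lambda_j\eta p_j$ and $\overline y_k:=\Lambda_k^{-1}\sum_{j=0}^{k-1}\lambda_j\eta p_jy_j$, and $\beta:=\big(\frac{1}{1-\overline\lambda^2L^2}+\frac{1}{2\underline\lambda\eta\mu}\big)^{-1}\in(0,1)$. Then for all $k\ge1$, $$-B_H\,\mathrm{dist}(\overline y_k,Q)\le\mathrm{Gap}(\overline y_k,H,Q)\le(k+1)(1-\beta)^k\Big(\frac{D_X^2}{\underline\lambda\eta}\Big).$$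
   Context: Work in $\mathbb{R}^n$ with Euclidean inner product $\langle\cdot,\cdot\rangle$ and norm $\|\cdot\|$. The maps $F\colon \mathrm{Dom}\,F\to\mathbb{R}^n$ and $H\colon\mathrm{Dom}\,H\to\mathbb{R}^n$ are monotone and Lipschitz continuous with constants $L_F>0$ and $L_H>0$; $H$ is $\mu$-strongly monotone means $\langle H(x)-H(y),x-y\rangle\ge\mu\|x-y\|^2$ for all $x,y\in\mathrm{Dom}\,H$. $X$ is a nonempty compact convex set and $\Omega$ a nonempty closed convex set with $X\subset\Omega\subset\mathrm{Dom}\,F\cap\mathrm{Dom}\,H$; $P_X,P_\Omega$ denote orthogonal projections. $Q:=\{x\in X:\langle F(x),y-x\rangle\ge0\ \forall y\in X\}$ is assumed nonempty. $D_X:=\sup_{x,y\in X}\|x-y\|$, $B_H:=\sup_{x\in Q}\|H(x)\|$, $\mathrm{dist}(y,Q)$ is the Euclidean distance to $Q$. $\mathrm{Gap}(z,H,Q):=\sup_{x\in Q}\langle H(x),z-x\rangle$. IneIREG method: start with $x_0=x_{-1}\in X$; for $k=0,1,\dots$, with parameters $\alpha_k\ge0$, $\lambda_k>0$, $\eta_k>0$, set $w_k=x_k+\alpha_k(x_k-x_{k-1})$, $w'_k=P_\Omega(w_k)$, $y_k=P_X\big(w_k-\lambda_k(F(w'_k)+\eta_kH(w'_k))\big)$, $x_{k+1}=P_X\big(w_k-\lambda_k(F(y_k)+\eta_kH(y_k))\big)$. *)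

(* Defs.v *)
From HB Require Import structures.
From mathcomp Require Import all_boot all_order all_algebra.
From mathcomp Require Import all_classical all_reals all_analysis.
Set Implicit Arguments. Unset Strict Implicit. Unset Printing Implicit Defensive.
Import Order.TTheory GRing.Theory Num.Theory.
Import numFieldNormedType.Exports.
Local Open Scope classical_set_scope.
Local Open Scope ring_scope.

Section Defs.
Variables (R : realType) (n : nat).
Notation vec := 'rV[R]_n.

Definition dot (u v : vec) : R := \sum_(i < n) u ord0 i * v ord0 i.
Definition enorm (u : vec) : R := Num.sqrt (dot u u).

Definition vi_convex (A : set vec) : Prop :=
  forall x y (t : R), A x -> A y -> 0 <= t <= 1 -> A ((1 - t) *: x + t *: y).

Definition vi_monotone (D : set vec) (G : vec -> vec) : Prop :=
  forall x y, D x -> D y -> 0 <= dot (G x - G y) (x - y).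

Definition vi_strongly_monotone (D : set vec) (G : vec -> vec) (mu : R) : Prop :=
  forall x y, D x -> D y -> mu * enorm (x - y) ^+ 2 <= dot (G x - G y) (x - y).

Definition vi_lipschitz (D : set vec) (G : vec -> vec) (L : R) : Prop :=
  forall x y, D x -> D y -> enorm (G x - G y) <= L * enorm (x - y).

Definition is_proj (A : set vec) (P : vec -> vec) : Prop :=
  forall z, A (P z) /\ forall y, A y -> enorm (z - P z) <= enorm (z - y).

(* compactness / closedness for the standard (product = Euclidean) topology *)
Definition vcompact (A : set vec) : Prop := compact A.
Definition vclosed (A : set vec) : Prop := closed A.

Definition VIsol (F : vec -> vec) (X : set vec) : set vec :=
  [set x | X x /\ forall y, X y -> 0 <= dot (F x) (y - x)].

Definition vi_diam (X : set vec) : R := sup [set enorm (x - y) | x in X & y in X].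
Definition supnorm_on (H : vec -> vec) (Q : set vec) : R :=
  sup [set enorm (H x) | x in Q].
Definition vi_dist (y : vec) (Q : set vec) : R := inf [set enorm (y - q) | q in Q].
Definition Gap (z : vec) (H : vec -> vec) (Q : set vec) : R :=
  sup [set dot (H x) (z - x) | x in Q].

Definition betac (lam lam' L eta mu : R) : R :=
  ((1 - lam ^+ 2 * L ^+ 2)^-1 + (2 * lam' * eta * mu)^-1)^-1.

End Defs.

(* Main.v *)
Require Import Defs.
From HB Require Import structures.
From mathcomp Require Import all_boot all_order all_algebra.
From mathcomp Require Import all_classical all_reals all_analysis.
From mathcomp Require Import ring lra.
Import Order.TTheory GRing.Theory Num.Theory.
Local Open Scope classical_set_scope.
Local Open Scope ring_scope.

Section DotLemmas.
Import numFieldNormedType.Exports.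
Set Implicit Arguments. Unset Strict Implicit.
Variables (R : realType) (n : nat).
Implicit Types (u v w : 'rV[R]_n) (a b c : R).

Lemma dotC u v : dot u v = dot v u.
Proof. by apply: eq_bigr => i _; rewrite mulrC. Qed.
Lemma dotDl u v w : dot (u + v) w = dot u w + dot v w.
Proof. by rewrite /dot -big_split; apply: eq_bigr => i _; rewrite mxE mulrDl. Qed.
Lemma dotZl a u v : dot (a *: u) v = a * dot u v.
Proof. by rewrite /dot mulr_sumr; apply: eq_bigr => i _; rewrite mxE mulrA. Qed.
Lemma dotNl u v : dot (- u) v = - dot u v.
Proof. by rewrite -scaleN1r dotZl mulN1r. Qed.
Lemma dotBl u v w : dot (u - v) w = dot u w - dot v w.
Proof. by rewrite dotDl dotNl. Qed.
Lemma dotDr u v w : dot w (u + v) = dot w u + dot w v.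
Proof. by rewrite dotC dotDl !(dotC w). Qed.
Lemma dotZr a u v : dot v (a *: u) = a * dot v u.
Proof. by rewrite dotC dotZl dotC. Qed.
Lemma dotNr u v : dot v (- u) = - dot v u.
Proof. by rewrite dotC dotNl dotC. Qed.
Lemma dotBr u v w : dot w (u - v) = dot w u - dot w v.
Proof. by rewrite dotDr dotNr. Qed.
Lemma dot0l u : dot 0 u = 0.
Proof. by rewrite /dot big1 // => i _; rewrite mxE mul0r. Qed.
Lemma dot0r u : dot u 0 = 0.
Proof. by rewrite dotC dot0l. Qed.
Lemma dot_ge0 u : 0 <= dot u u.
Proof. by rewrite /dot; apply: sumr_ge0 => i _; rewrite -expr2 sqr_ge0. Qed.
Lemma dot_eq0 u : dot u u = 0 -> u = 0.
Proof.
move=> h; apply/rowP => i; rewrite [RHS]mxE.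
have hp : forall j : 'I_n, predT j -> 0 <= u ord0 j * u ord0 j by move=> j _; rewrite -expr2 sqr_ge0.
have /= := @psumr_eq0P _ _ predT (fun i => u ord0 i * u ord0 i) hp h i isT.
by move/eqP; rewrite -expr2 sqrf_eq0 => /eqP.
Qed.

Lemma enorm_ge0 u : 0 <= enorm u.
Proof. exact: sqrtr_ge0. Qed.
Lemma enorm_sq u : enorm u ^+ 2 = dot u u.
Proof. by rewrite /enorm sqr_sqrtr // dot_ge0. Qed.
Lemma le_from_sq a b : 0 <= b -> a ^+ 2 <= b ^+ 2 -> a <= b.
Proof. move=> hb h; nra. Qed.
Lemma enorm_le u c : 0 <= c -> dot u u <= c ^+ 2 -> enorm u <= c.
Proof. by move=> hc h; apply: le_from_sq => //; rewrite enorm_sq. Qed.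
Lemma enormN u : enorm (- u) = enorm u.
Proof. by rewrite /enorm dotNl dotNr opprK. Qed.
Lemma enorm_leP u v : enorm u <= enorm v -> dot u u <= dot v v.
Proof.
move=> h; rewrite -!enorm_sq; have := enorm_ge0 u; nra.
Qed.
Lemma CS u v : dot u v <= enorm u * enorm v.
Proof.
have [->|hu] := eqVneq u 0.
  by rewrite dot0l /enorm dot0l sqrtr0 mul0r.
have hA : 0 < dot u u.
  by rewrite lt_neqAle dot_ge0 andbT eq_sym; apply/eqP => /dot_eq0; apply/eqP.
set A := dot u u; set B := dot u v; set C := dot v v.
have key : B ^+ 2 <= A * C.
  have := dot_ge0 ((B / A) *: u - v).
  rewrite !(dotBl, dotBr, dotZl, dotZr) -/A -/B -/C (dotC v u) -/B.
  move=> h.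
  have e : B / A * (B / A * A - B) - (B / A * B - C) = C - B^+2 / A.
    by field; rewrite gt_eqF.
  rewrite e subr_ge0 ler_pdivrMr // in h; nra.
have hn := enorm_ge0 u; have hm := enorm_ge0 v.
have : B ^+ 2 <= (enorm u * enorm v) ^+ 2 by rewrite exprMn !enorm_sq.
have := mulr_ge0 hn hm; move: (enorm u * enorm v) => p hp h2; nra.
Qed.
Lemma CSN u v : - dot u v <= enorm u * enorm v.
Proof. by rewrite -dotNl -(enormN u) CS. Qed.
Lemma enorm_triangle u v : enorm (u + v) <= enorm u + enorm v.
Proof.
apply: enorm_le; first by rewrite addr_ge0 // enorm_ge0.
rewrite dotDl !dotDr (dotC v u) sqrrD !enorm_sq.
have := CS u v; lra.
Qed.
Lemma enormZ a u : enorm (a *: u) = `|a| * enorm u.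
Proof. by rewrite /enorm dotZl dotZr mulrA -expr2 sqrtrM ?sqr_ge0 // sqrtr_sqr. Qed.
Lemma dot_sum_r u k (f : nat -> 'rV[R]_n) :
  dot u (\sum_(j < k) f j) = \sum_(j < k) dot u (f j).
Proof.
elim: k => [|k ih]; first by rewrite !big_ord0 dot0r.
by rewrite !big_ord_recr /= dotDr ih.
Qed.

Lemma proj_vi (A : set 'rV[R]_n) P z y' :
  vi_convex A -> is_proj A P -> A y' -> dot (z - P z) (y' - P z) <= 0.
Proof.
move=> cA hP Ay.
have [APz hmin] := hP z.
set e := z - P z; set v := y' - P z.
have eqv : forall t, z - ((1 - t) *: P z + t *: y') = e - t *: v.
  by move=> t; apply/rowP => i; rewrite !mxE; ring.
have {}hmin : forall y, A y -> enorm e <= enorm (z - y) by exact: hmin.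
clearbody e v.
rewrite leNgt; apply/negP => hev.
have hvv := dot_ge0 v.
set t := dot e v / (dot e v + dot v v).
have hd : 0 < dot e v + dot v v by lra.
have ht0 : 0 <= t by rewrite /t divr_ge0 //; lra.
have ht1 : t <= 1 by rewrite /t ler_pdivrMr // mul1r; lra.
have At := cA _ _ t APz Ay (ltac:(by rewrite ht0 ht1)).
have := enorm_leP (hmin _ At).
rewrite eqv.
rewrite !(dotBl, dotBr, dotZl, dotZr) (dotC v e) => h.
have tp : 0 < t by rewrite /t divr_gt0.
have h2 : 2 * dot e v <= t * dot v v.
  have : t * (2 * dot e v - t * dot v v) <= 0 by lra.
  nra.
have : t * dot v v * (dot e v + dot v v) = dot e v * dot v v.
  by rewrite /t; field; rewrite gt_eqF.
nra.
Qed.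

Lemma proj_nonexp (A : set 'rV[R]_n) P z y' :
  vi_convex A -> is_proj A P -> A y' -> dot (P z - y') (P z - y') <= dot (z - y') (z - y').
Proof.
move=> cA hP Ay; have := @proj_vi A P z y' cA hP Ay.
have -> : z - y' = (z - P z) - (y' - P z) by apply/rowP => i; rewrite !mxE; ring.
have -> : P z - y' = - (y' - P z) by apply/rowP => i; rewrite !mxE; ring.
move: (z - P z) (y' - P z) => e v.
rewrite !(dotBl, dotBr, dotNl, dotNr) (dotC v e) opprK.
have := dot_ge0 e; lra.
Qed.

Lemma eg_core (G : 'rV[R]_n -> 'rV[R]_n) (L lam : R) w u yk xp xs :
  0 <= lam ->
  dot (w - lam *: G u - yk) (xp - yk) <= 0 ->
  dot (w - lam *: G yk - xp) (xs - xp) <= 0 ->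
  dot (G u - G yk) (G u - G yk) <= L ^+ 2 * dot (w - yk) (w - yk) ->
  dot (xp - xs) (xp - xs) <= dot (w - xs) (w - xs)
    - (1 - lam ^+ 2 * L ^+ 2) * dot (w - yk) (w - yk) - 2 * lam * dot (G yk) (yk - xs).
Proof.
move=> hlam.
have -> : w - lam *: G u - yk = (w - yk) - lam *: G yk - lam *: (G u - G yk).
  by apply/rowP => i; rewrite !mxE; ring.
have -> : w - lam *: G yk - xp = (w - yk) - (xp - yk) - lam *: G yk.
  by apply/rowP => i; rewrite !mxE; ring.
have -> : xs - xp = - (xp - yk) - (yk - xs).
  by apply/rowP => i; rewrite !mxE; ring.
have -> : xp - xs = (xp - yk) + (yk - xs).
  by apply/rowP => i; rewrite !mxE; ring.
have -> : w - xs = (w - yk) + (yk - xs).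
  by apply/rowP => i; rewrite !mxE; ring.
have := dot_ge0 (lam *: (G u - G yk) - (xp - yk)).
move: (w - yk) (xp - yk) (yk - xs) (G yk) (G u - G yk) => A B C g d.
rewrite !(dotBl, dotBr, dotDl, dotDr, dotNl, dotNr, dotZl, dotZr).
rewrite ?(dotC B A) ?(dotC C A) ?(dotC C B) ?(dotC g A) ?(dotC g B) ?(dotC d A) ?(dotC d B) ?(dotC g C) ?(dotC C g) ?(dotC d g).
move=> h0 h1 h2 h3.
have h4 : lam ^+ 2 * dot d d <= lam ^+ 2 * (L ^+ 2 * dot A A) by apply: ler_wpM2l => //; apply: sqr_ge0.
nra.
Qed.

Lemma enorm_mono u v : dot u u <= dot v v -> enorm u <= enorm v.
Proof. by move=> h; rewrite /enorm ler_sqrt // dot_ge0. Qed.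

Lemma inertial_id a u v : dot (u + a *: (u - v)) (u + a *: (u - v)) =
  (1 + a) * dot u u - a * dot v v + a * (1 + a) * dot (u - v) (u - v).
Proof.
rewrite !(dotBl, dotBr, dotDl, dotDr, dotZl, dotZr) (dotC v u); ring.
Qed.

Lemma compact_enorm_bound (X : set 'rV[R]_n) : compact X ->
  exists K, 0 <= K /\ forall v, X v -> enorm v <= K.
Proof.
move=> /compact_bounded [M [Mr HM]].
have hM := HM (`|M| + 1) (ltac:(have := ler_norm M; lra)).
set M' := `|M| + 1.
have hM' : 0 <= M' by rewrite /M'; have := normr_ge0 M; lra.
exists (1 + n%:R * M' ^+ 2); split.
  by rewrite addr_ge0 // mulr_ge0 // sqr_ge0.
move=> v Xv; have hv := hM v Xv; rewrite /= in hv.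
apply: enorm_le; first by rewrite addr_ge0 // mulr_ge0 // sqr_ge0.
have : dot v v <= n%:R * M' ^+ 2.
  have -> : n%:R * M' ^+ 2 = \sum_(i < n) M' ^+ 2 by rewrite sumr_const card_ord mulr_natl.
  rewrite /dot; apply: ler_sum => i _.
  have hi : `|v ord0 i| <= `|v|.
    rewrite [X in _ <= X]mx_normrE.
    exact: (le_bigmax _ (fun ij : 'I_1 * 'I_n => `|v ij.1 ij.2|) (ord0, i)).
  have h2 : `|v ord0 i| <= M' by apply: le_trans hi hv.
  rewrite -expr2 -real_normK ?num_real //.
  have := normr_ge0 (v ord0 i); nra.
have := mulr_ge0 (ler0n R n) (sqr_ge0 M'); move: (n%:R * M' ^+ 2) => c hc h; nra.
Qed.
End DotLemmas.

Section RealLemmas.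
Set Implicit Arguments. Unset Strict Implicit.
Variable R : realType.
Implicit Types a b s t : R.

Lemma inv_sum_bounds a b : 0 < a -> a <= 1 -> 0 < b -> 0 < (a^-1 + b^-1)^-1 < 1.
Proof.
move=> ha ha1 hb.
have hai : 1 <= a^-1 by rewrite -invr1 lef_pV2 ?posrE.
have hbi : 0 < b^-1 by rewrite invr_gt0.
apply/andP; split; first by rewrite invr_gt0; lra.
by rewrite invf_lt1; lra.
Qed.

Lemma inv_sum_mono a b a' b' : 0 < a -> 0 < b -> a <= a' -> b <= b' ->
  (a^-1 + b^-1)^-1 <= (a'^-1 + b'^-1)^-1.
Proof.
move=> ha hb haa hbb.
have h1 : a'^-1 <= a^-1 by rewrite lef_pV2 ?posrE //; lra.
have h2 : b'^-1 <= b^-1 by rewrite lef_pV2 ?posrE //; lra.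
have p1 : 0 < a'^-1 by rewrite invr_gt0; lra.
have p2 : 0 < b'^-1 by rewrite invr_gt0; lra.
rewrite lef_pV2 ?posrE; lra.
Qed.

Lemma am_ineq a b s t : 0 < a -> 0 < b ->
  (a^-1 + b^-1)^-1 * (s + t) ^+ 2 <= a * s ^+ 2 + b * t ^+ 2.
Proof.
move=> ha hb.
have hc : 0 < a^-1 + b^-1 by rewrite addr_gt0 // invr_gt0.
rewrite mulrC -ler_pdivlMr ?invr_gt0 // invrK.
have e : (a * s ^+ 2 + b * t ^+ 2) * (a^-1 + b^-1) - (s + t) ^+ 2 = (a * s - b * t) ^+ 2 / (a * b).
  by field; rewrite !gt_eqF.
rewrite -subr_ge0 e divr_ge0 ?sqr_ge0 // mulr_ge0 //; lra.
Qed.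
End RealLemmas.

Section EGStep.
Set Implicit Arguments. Unset Strict Implicit.
Lemma eg_step (R : realType) (n : nat) (F H : 'rV[R]_n -> 'rV[R]_n)
  (DomF DomH X Omega : set 'rV[R]_n) (LF LH mu : R) (PX POm : 'rV[R]_n -> 'rV[R]_n)
  (eta lam : R) (wk uk yk xp xs : 'rV[R]_n) :
  0 <= LF -> 0 <= LH -> 0 < mu -> 0 < eta -> 0 < lam ->
  lam * (LF + eta * LH) < 1 ->
  vi_monotone DomF F -> vi_lipschitz DomF F LF -> vi_lipschitz DomH H LH ->
  vi_strongly_monotone DomH H mu ->
  vi_convex X -> vi_convex Omega -> X `<=` Omega -> Omega `<=` DomF `&` DomH ->
  is_proj X PX -> is_proj Omega POm ->
  uk = POm wk -> yk = PX (wk - lam *: (F uk + eta *: H uk)) ->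
  xp = PX (wk - lam *: (F yk + eta *: H yk)) ->
  VIsol F X xs ->
  dot (xp - xs) (xp - xs) <=
    (1 - betac lam lam (LF + eta * LH) eta mu) * dot (wk - xs) (wk - xs)
    - 2 * lam * eta * dot (H xs) (yk - xs).
Proof.
move=> hLF hLH hmu heta hlam hlamL monF lipF lipH smH convX convOm XOm OmD projX projOm
  huk hyk hxp [Xxs solxs].
set L := LF + eta * LH.
have hL : 0 <= L by rewrite /L addr_ge0 // mulr_ge0 // ltW.
pose G v := F v + eta *: H v.
have Xyk : X yk by rewrite hyk; case: (projX (wk - lam *: (F uk + eta *: H uk))).
have Xxp : X xp by rewrite hxp; case: (projX (wk - lam *: (F yk + eta *: H yk))).
have Ouk : Omega uk by rewrite huk; case: (projOm wk).
have Oyk : Omega yk by apply: XOm.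
have Oxs : Omega xs by apply: XOm.
have [DFu DHu] := OmD _ Ouk.
have [DFy DHy] := OmD _ Oyk.
have [DFx DHx] := OmD _ Oxs.
have vi1 : dot (wk - lam *: G uk - yk) (xp - yk) <= 0.
  rewrite hyk; exact: (@proj_vi _ _ X PX (wk - lam *: G uk) xp convX projX Xxp).
have vi2 : dot (wk - lam *: G yk - xp) (xs - xp) <= 0.
  rewrite hxp; exact: (@proj_vi _ _ X PX (wk - lam *: G yk) xs convX projX Xxs).
have lip : dot (G uk - G yk) (G uk - G yk) <= L ^+ 2 * dot (wk - yk) (wk - yk).
  have e1 : G uk - G yk = (F uk - F yk) + eta *: (H uk - H yk).
    by apply/rowP => i; rewrite !mxE; ring.
  have hu : enorm (uk - yk) <= enorm (wk - yk).
    by apply: enorm_mono; rewrite huk; exact: (@proj_nonexp _ _ Omega POm wk yk convOm projOm Oyk).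
  have : enorm (G uk - G yk) <= L * enorm (wk - yk).
    rewrite e1; apply: le_trans (enorm_triangle _ _) _.
    rewrite enormZ (ger0_norm (ltW heta)).
    have := lipF _ _ DFu DFy; have := lipH _ _ DHu DHy.
    have := enorm_ge0 (uk - yk).
    rewrite /L => h0 h1 h2.
    have : eta * enorm (H uk - H yk) <= eta * (LH * enorm (uk - yk)) by rewrite ler_wpM2l // ltW.
    have : LF * enorm (uk - yk) <= LF * enorm (wk - yk) by rewrite ler_wpM2l.
    have : eta * LH * enorm (uk - yk) <= eta * LH * enorm (wk - yk) by rewrite ler_wpM2l // mulr_ge0 // ltW.
    lra.
  rewrite -!enorm_sq => h; have := enorm_ge0 (G uk - G yk).
  have := mulr_ge0 hL (enorm_ge0 (wk - yk)).
  rewrite -exprMn; move: h; move: (enorm (G uk - G yk)) => a0; move: (L * enorm (wk - yk)) => b0; nra.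
have core := eg_core (ltW hlam) vi1 vi2 lip.
have hF : 0 <= dot (F yk) (yk - xs).
  have := monF _ _ DFy DFx; have := solxs _ Xyk.
  rewrite dotBl; lra.
have hH : mu * enorm (yk - xs) ^+ 2 + dot (H xs) (yk - xs) <= dot (H yk) (yk - xs).
  have := smH _ _ DHy DHx; rewrite dotBl; lra.
have hG : eta * (mu * enorm (yk - xs) ^+ 2 + dot (H xs) (yk - xs)) <= dot (G yk) (yk - xs).
  rewrite /G dotDl dotZl.
  have : eta * (mu * enorm (yk - xs) ^+ 2 + dot (H xs) (yk - xs)) <= eta * dot (H yk) (yk - xs).
    by rewrite ler_wpM2l // ltW.
  lra.
have hG2 : lam * (eta * (mu * enorm (yk - xs) ^+ 2 + dot (H xs) (yk - xs))) <= lam * dot (G yk) (yk - xs).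
  by rewrite ler_wpM2l // ltW.
have htri : dot (wk - xs) (wk - xs) <= (enorm (wk - yk) + enorm (yk - xs)) ^+ 2.
  rewrite -enorm_sq.
  have -> : wk - xs = (wk - yk) + (yk - xs) by apply/rowP => i; rewrite !mxE; ring.
  have := enorm_triangle (wk - yk) (yk - xs); have := enorm_ge0 (wk - yk + (yk - xs)).
  move: (enorm (wk - yk + (yk - xs))) => a h0 h1.
  have := enorm_ge0 (wk - yk); have := enorm_ge0 (yk - xs); nra.
set a := 1 - lam ^+ 2 * L ^+ 2.
set b := 2 * lam * eta * mu.
have ha : 0 < a.
  rewrite /a subr_gt0 -exprMn expr2; have := mulr_ge0 (ltW hlam) hL; move: (lam * L) hlamL => c hc1 hc0. nra.
have hb : 0 < b by rewrite /b !mulr_gt0.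
have am := am_ineq (enorm (wk - yk)) (enorm (yk - xs)) ha hb.
have -> : betac lam lam L eta mu = (a^-1 + b^-1)^-1 by [].
have /andP [hb0 hb1] : 0 < (a^-1 + b^-1)^-1 < 1.
  apply: inv_sum_bounds => //; rewrite /a; have := sqr_ge0 (lam * L); rewrite exprMn; lra.
have htri2 : (a^-1 + b^-1)^-1 * dot (wk - xs) (wk - xs) <= (a^-1 + b^-1)^-1 * (enorm (wk - yk) + enorm (yk - xs)) ^+ 2.
  by rewrite ler_wpM2l // ltW.
rewrite !enorm_sq in am htri2 hG2 hG.
rewrite -/L -/a in core.
move: am htri2 hG2 core; rewrite /b.
move: ((a^-1 + b^-1)^-1) => B.
move=> *; nra.
Qed.

End EGStep.

Theorem corollary4p14 (R : realType) (n : nat)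
  (F H : 'rV[R]_n -> 'rV[R]_n) (DomF DomH X Omega : set 'rV[R]_n)
  (LF LH mu : R) (PX POm : 'rV[R]_n -> 'rV[R]_n)
  (eta lamlo lamhi : R) (lam alpha : nat -> R)
  (x y w w' : nat -> 'rV[R]_n) :
  0 < LF -> 0 < LH -> 0 < mu ->
  vi_monotone DomF F -> vi_lipschitz DomF F LF ->
  vi_monotone DomH H -> vi_lipschitz DomH H LH ->
  vi_strongly_monotone DomH H mu ->
  X !=set0 -> vcompact X -> vi_convex X ->
  Omega !=set0 -> vclosed Omega -> vi_convex Omega ->
  X `<=` Omega -> Omega `<=` DomF `&` DomH ->
  is_proj X PX -> is_proj Omega POm ->
  VIsol F X !=set0 ->
  (* parameters *)
  0 < eta ->
  0 < lamlo -> lamlo <= lamhi -> lamhi < (LF + eta * LH)^-1 ->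
  (forall k, lamlo <= lam k <= lamhi) ->
  (forall k, 0 <= alpha k) -> alpha 0%N <= 1 ->
  (forall k, alpha k.+1 <=
     (1 - betac (lam k) (lam k) (LF + eta * LH) eta mu) * alpha k) ->
  (* IneIREG iterates, with x_{-1} = x_0 *)
  X (x 0%N) ->
  (forall k, w k = x k + alpha k *: (x k - (if k is k'.+1 then x k' else x 0%N))) ->
  (forall k, w' k = POm (w k)) ->
  (forall k, y k = PX (w k - lam k *: (F (w' k) + eta *: H (w' k)))) ->
  (forall k, x k.+1 = PX (w k - lam k *: (F (y k) + eta *: H (y k)))) ->
  let L := LF + eta * LH in
  let beta_ k := betac (lam k) (lam k) L eta mu in
  let p k := (\prod_(i < k.+1) (1 - beta_ i))^-1 in
  let Lam k := \sum_(j < k) lam j * eta * p j in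
  let ybar k := (Lam k)^-1 *: \sum_(j < k) (lam j * eta * p j) *: y j in
  let beta := betac lamhi lamlo L eta mu in
  let Q := VIsol F X in
  (0 < beta < 1) /\
  forall k : nat, (1 <= k)%N ->
    - supnorm_on H Q * vi_dist (ybar k) Q <= Gap (ybar k) H Q /\
    Gap (ybar k) H Q <=
      k.+1%:R * (1 - beta) ^+ k * (vi_diam X ^+ 2 / (lamlo * eta)).
Proof.
move=> hLF hLH hmu monF lipF monH lipH smH X0 cX convX Om0 clOm convOm XOm OmD
  projX projOm Q0 heta hlo hlohi hhi hlam hal0 hal01 halst hx0 hw hw' hy hx
  L beta_ p Lam ybar beta Q.
have hL : 0 < L by rewrite /L addr_gt0 // mulr_gt0.
have hhiL : lamhi * L < 1.
  by move: hhi; rewrite -/L -(ltr_pM2r hL) mulVf // gt_eqF.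
have hlamk k : 0 < lam k /\ lam k * L < 1.
  have /andP [h1 h2] := hlam k; split; first lra.
  have : lam k * L <= lamhi * L by rewrite ler_pM2r.
  lra.
have hbk k : 0 < beta_ k < 1.
  have [h1 h2] := hlamk k.
  rewrite /beta_ /betac; apply: inv_sum_bounds.
  - rewrite subr_gt0 -exprMn expr2; have := mulr_ge0 (ltW h1) (ltW hL).
    move: (lam k * L) h2 => c hc1 hc0; nra.
  - have := sqr_ge0 (lam k * L); rewrite exprMn; lra.
  - by rewrite !mulr_gt0.
have hbeta : 0 < beta < 1.
  rewrite /beta /betac; apply: inv_sum_bounds.
  - rewrite subr_gt0 -exprMn expr2; have := mulr_ge0 (ltW (lt_le_trans hlo hlohi)) (ltW hL).
    move: (lamhi * L) hhiL => c hc1 hc0; nra.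
  - have := sqr_ge0 (lamhi * L); rewrite exprMn; lra.
  - by rewrite !mulr_gt0.
have hbb k : beta <= beta_ k.
  have /andP [h1 h2] := hlam k.
  rewrite /beta /beta_ /betac; apply: inv_sum_mono.
  - rewrite subr_gt0 -exprMn expr2; have := mulr_ge0 (ltW (lt_le_trans hlo hlohi)) (ltW hL).
    move: (lamhi * L) hhiL => c hc1 hc0; nra.
  - by rewrite !mulr_gt0.
  - rewrite lerD2l lerN2 -!exprMn; have hp : 0 <= lam k * L by rewrite mulr_ge0 // ltW //; lra.
    have : lam k * L <= lamhi * L by rewrite ler_pM2r.
    move: (lam k * L) (lamhi * L) hp => c d hc hcd; nra.
  - rewrite -!mulrA ler_pM2l // ler_pM2r //; last by rewrite mulr_gt0.
split; first exact: hbeta.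
move=> k hk.
have [K [K0 hK]] := compact_enorm_bound cX.
set D := vi_diam X.
have hDub : has_ubound [set enorm (u - v) | u in X & v in X].
  exists (K + K) => r [u Xu [v Xv <-]].
  apply: le_trans (enorm_triangle _ _) _; rewrite enormN.
  by have := hK _ Xu; have := hK _ Xv; lra.
have hD u v : X u -> X v -> enorm (u - v) <= D.
  by move=> Xu Xv; apply: ub_le_sup hDub _ _; exists u => //; exists v.
have hDsq u v : X u -> X v -> dot (u - v) (u - v) <= D ^+ 2.
  move=> Xu Xv; rewrite -enorm_sq; have := hD u v Xu Xv; have := enorm_ge0 (u - v).
  move: (enorm (u - v)) => e h1 h2; nra.
have hD0 : 0 <= D.
  by case: X0 => u Xu; apply: le_trans (hD u u Xu Xu); apply: enorm_ge0.
have hxX j : X (x j).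
  by case: j => [|j] //; rewrite hx; case: (projX (w j - lam j *: (F (y j) + eta *: H (y j)))).
have hyX j : X (y j).
  by rewrite hy; case: (projX (w j - lam j *: (F (w' j) + eta *: H (w' j)))).
pose xm j := if j is j'.+1 then x j' else x 0%N.
have hxmX j : X (xm j) by case: j.
have hw2 j : w j = x j + alpha j *: (x j - xm j) := hw j.
pose pi j := \prod_(i < j) (1 - beta_ i).
have hpi_pos j : 0 < pi j.
  by apply: prodr_gt0 => i _; have /andP [_ h] := hbk i; rewrite subr_gt0.
have hpi_rec j : pi j.+1 = pi j * (1 - beta_ j) by rewrite /pi big_ord_recr.
have hpi_le j : pi j <= (1 - beta) ^+ j.
  elim: j => [|j ih]; first by rewrite /pi big_ord0 expr0.
  rewrite hpi_rec exprSr; apply: ler_pM => //; first exact: ltW.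
  - by have /andP [_ h] := hbk j; lra.
  - by have := hbb j; lra.
pose q j := (pi j)^-1.
have hq_pos j : 0 < q j by rewrite /q invr_gt0.
have hq_rec j : q j.+1 * (1 - beta_ j) = q j.
  rewrite /q hpi_rec invfM -mulrA mulVf ?mulr1 //.
  by have /andP [_ h] := hbk j; rewrite subr_eq0 eq_sym lt_eqF.
have hq0 : q 0%N = 1 by rewrite /q /pi big_ord0 invr1.
have hpq j : p j = q j.+1 by [].
have halst' j : alpha j.+1 <= (1 - beta_ j) * alpha j := halst j.
have hal1 j : alpha j <= 1.
  elim: j => [|j ih] //; apply: le_trans (halst' j) _.
  have /andP [h1 h2] := hbk j; have := hal0 j; nra.
pose a j := q j * alpha j.
have ha0 j : 0 <= a j by rewrite mulr_ge0 // ltW.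
have ha_mono j : a j.+1 <= a j.
  rewrite /a -(hq_rec j) -mulrA; apply: ler_wpM2l; first exact: ltW.
  exact: halst'.
have ha1 j : a j <= 1.
  elim: j => [|j ih]; first by rewrite /a hq0 mul1r.
  exact: le_trans (ha_mono j) ih.
have main : forall xs, Q xs ->
    dot (H xs) (ybar k - xs) <= k.+1%:R * (1 - beta) ^+ k * (D ^+ 2 / (lamlo * eta)).
  move=> xs Qxs; have [Xxs _] := Qxs.
  pose d j := dot (x j - xs) (x j - xs).
  pose dm j := dot (xm j - xs) (xm j - xs).
  pose m j := dot (x j - xm j) (x j - xm j).
  pose h j := dot (H xs) (y j - xs).
  pose Phi j := q j * d j - a j * dm j.
  have hstep j : d j.+1 <= (1 - beta_ j) * dot (w j - xs) (w j - xs) - 2 * lam j * eta * h j.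
    have [h1 h2] := hlamk j.
    exact: (eg_step (ltW hLF) (ltW hLH) hmu heta h1 h2 monF lipF lipH smH convX convOm
      XOm OmD projX projOm (hw' j) (hy j) (hx j) Qxs).
  have hW j : dot (w j - xs) (w j - xs) = (1 + alpha j) * d j - alpha j * dm j + alpha j * (1 + alpha j) * m j.
    rewrite hw2.
    have -> : x j + alpha j *: (x j - xm j) - xs = (x j - xs) + alpha j *: ((x j - xs) - (xm j - xs)).
      by apply/rowP => i; rewrite !mxE; ring.
    rewrite inertial_id.
    have -> : (x j - xs) - (xm j - xs) = x j - xm j by apply/rowP => i; rewrite !mxE; ring.
    by [].
  have hd j : 0 <= d j by apply: dot_ge0.
  have hdD j : d j <= D ^+ 2 by apply: hDsq.
  have hdmD j : dm j <= D ^+ 2 by apply: hDsq.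
  have hm0 j : 0 <= m j by apply: dot_ge0.
  have hmD j : m j <= D ^+ 2 by apply: hDsq.
  have claim N : \sum_(j < N) 2 * lam j * eta * q j.+1 * h j + Phi N
      <= Phi 0%N + (a 0%N - a N) * D ^+ 2 + 2 * N%:R * D ^+ 2.
    elim: N => [|N ih].
      by rewrite big_ord0 add0r subrr mul0r addr0 mulr0 mul0r addr0.
    rewrite big_ord_recr /=.
    move: ih; set S := \sum_(j < N) _ => ih.
    have hs := hstep N.
    have hs2 : q N.+1 * d N.+1 <= q N * dot (w N - xs) (w N - xs) - 2 * lam N * eta * q N.+1 * h N.
      have := ler_wpM2l (ltW (hq_pos N.+1)) hs.
      rewrite mulrBr mulrA hq_rec => hh; apply: le_trans hh _.
      by rewrite !mulrA [_ * 2]mulrC -!mulrA [q _ * _]mulrC; lra.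
    rewrite hW in hs2.
    have hdm : dm N.+1 = d N by [].
    have e1 : Phi N.+1 = q N.+1 * d N.+1 - a N.+1 * d N by rewrite /Phi hdm.
    have f1 : (a N - a N.+1) * d N <= (a N - a N.+1) * D ^+ 2.
      by apply: ler_wpM2l; [rewrite subr_ge0 | ].
    have f2 : a N * (1 + alpha N) * m N <= 2 * D ^+ 2.
      have g1 : a N * (1 + alpha N) <= 2.
        have := ha1 N; have := ha0 N; have := hal1 N; have := hal0 N; nra.
      have g0 : 0 <= a N * (1 + alpha N) by rewrite mulr_ge0 // addr_ge0 // hal0.
      have := hmD N; have := hm0 N; nra.
    rewrite e1 -natr1.
    move: ih hs2 f1 f2; rewrite /Phi /a.
    move=> *; lra.
  set S := \sum_(j < k) 2 * lam j * eta * q j.+1 * h j.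
  have hS : S <= (2 * k%:R + 1) * D ^+ 2.
    have := claim k; rewrite -/S.
    have e0 : Phi 0%N = d 0%N - alpha 0%N * d 0%N by rewrite /Phi /a hq0 !mul1r.
    have hPk : - (a k * D ^+ 2) <= Phi k.
      rewrite /Phi; have := mulr_ge0 (ltW (hq_pos k)) (hd k).
      have := ler_wpM2l (ha0 k) (hdmD k); lra.
    have hh0 : (1 - alpha 0%N) * d 0%N <= (1 - alpha 0%N) * D ^+ 2 by apply: ler_wpM2l; [rewrite subr_ge0 | apply: hdD].
    have : d 0%N <= D ^+ 2 by apply: hdD.
    have ea0 : a 0%N = alpha 0%N by rewrite /a hq0 mul1r.
    rewrite e0 ea0 => *; lra.
  pose c j := lam j * eta * p j.
  have hc0 j : 0 <= c j.
    by rewrite /c hpq mulr_ge0 // ?mulr_ge0 // ltW // (hlamk j).1.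
  have [k' ek] : exists k', k = k'.+1 by case: (k) hk => // k'' _; exists k''.
  have hLamc : c k' <= Lam k.
    rewrite /Lam ek big_ord_recr /=.
    have : 0 <= \sum_(j < k') lam j * eta * p j by apply: sumr_ge0 => j _; apply: hc0.
    rewrite /c; lra.
  have hLam_lb : lamlo * eta * q k <= Lam k.
    apply: le_trans hLamc; rewrite /c hpq -ek.
    apply: ler_wpM2r; first exact: ltW.
    apply: ler_wpM2r; first exact: ltW.
    by have /andP [] := hlam k'.
  have hLpos : 0 < Lam k.
    by apply: lt_le_trans hLam_lb; rewrite !mulr_gt0.
  have hqk : 1 <= q k * (1 - beta) ^+ k.
    have : q k * pi k = 1 by rewrite /q mulVf // gt_eqF.
    have := ler_wpM2l (ltW (hq_pos k)) (hpi_le k); lra.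
  have key : lamlo * eta <= Lam k * (1 - beta) ^+ k.
    have hle := ler_wpM2l (ltW (mulr_gt0 hlo heta)) hqk.
    rewrite mulr1 in hle; apply: le_trans hle _.
    rewrite mulrA; apply: ler_wpM2r => //.
    by apply: exprn_ge0; have /andP [_ h1] := hbeta; lra.
  have evec : ybar k - xs = (Lam k)^-1 *: \sum_(j < k) c j *: (y j - xs).
    have s1 : \sum_(j < k) c j *: (y j - xs) = \sum_(j < k) c j *: y j - Lam k *: xs.
      by rewrite /Lam scaler_suml -sumrB; apply: eq_bigr => j _; rewrite scalerBr.
    by rewrite s1 scalerBr scalerA mulVf ?scale1r // gt_eqF.
  have edot : dot (H xs) (ybar k - xs) = (Lam k)^-1 * \sum_(j < k) c j * h j.
    rewrite evec dotZr (dot_sum_r (H xs) k (fun j => c j *: (y j - xs))); congr (_ * _); apply: eq_bigr => j _.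
    by rewrite dotZr.
  have eS : S = 2 * \sum_(j < k) c j * h j.
    by rewrite /S mulr_sumr; apply: eq_bigr => j _; rewrite /c hpq; ring.
  set T := \sum_(j < k) c j * h j in edot eS.
  have hT : T <= k.+1%:R * D ^+ 2.
    rewrite -natr1; have := sqr_ge0 D; lra.
  set V := (Lam k)^-1 in edot.
  have hV : 0 < V by rewrite /V invr_gt0.
  set Z := (1 - beta) ^+ k / (lamlo * eta).
  have hVZ : V <= Z.
    have := ler_wpM2l (ltW hV) key.
    rewrite /V [X in _ <= X]mulrA mulVf ?mul1r ?gt_eqF // => hh.
    by rewrite /Z ler_pdivlMr ?mulr_gt0.
  have -> : k.+1%:R * (1 - beta) ^+ k * (D ^+ 2 / (lamlo * eta)) = Z * (k.+1%:R * D ^+ 2).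
    by rewrite /Z; ring.
  rewrite edot; apply: le_trans (ler_wpM2l (ltW hV) hT) _.
  by apply: ler_wpM2r => //; rewrite mulr_ge0 ?sqr_ge0.
have [q0 Qq0] := Q0.
have Xq0 : X q0 by case: Qq0.
set z := ybar k in main *.
have hHub : has_ubound [set enorm (H u) | u in Q].
  exists (enorm (H q0) + LH * D) => r [u Qu <-].
  have Xu : X u by case: Qu.
  have [DFu DHu] := OmD _ (XOm _ Xu).
  have [DFq DHq] := OmD _ (XOm _ Xq0).
  have -> : H u = H q0 + (H u - H q0) by apply/rowP => i; rewrite !mxE; ring.
  apply: le_trans (enorm_triangle _ _) _.
  have := lipH _ _ DHu DHq.
  have := ler_wpM2l (ltW hLH) (hD _ _ Xu Xq0); lra.
set B := supnorm_on H Q.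
have hB u : Q u -> enorm (H u) <= B.
  by move=> Qu; apply: ub_le_sup hHub _ _; exists u.
have hB0 : 0 <= B by apply: le_trans (hB _ Qq0); apply: enorm_ge0.
have hzx u : Q u -> enorm (z - u) <= enorm z + K.
  move=> Qu; have Xu : X u by case: Qu.
  apply: le_trans (enorm_triangle _ _) _; rewrite enormN.
  by have := hK _ Xu; lra.
have hGub : has_ubound [set dot (H u) (z - u) | u in Q].
  exists (B * (enorm z + K)) => r [u Qu <-].
  apply: le_trans (CS _ _) _.
  apply: ler_pM; [exact: enorm_ge0 | exact: enorm_ge0 | exact: hB | exact: hzx].
have hg u : Q u -> dot (H u) (z - u) <= Gap z H Q.
  by move=> Qu; apply: ub_le_sup hGub _ _; exists u.
have hlow u : Q u -> - (B * enorm (z - u)) <= Gap z H Q.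
  move=> Qu; apply: le_trans (hg u Qu).
  have := CSN (H u) (z - u).
  have := ler_wpM2r (enorm_ge0 (z - u)) (hB u Qu); lra.
split.
  have [B0|Bpos] := eqVneq B 0.
    rewrite B0 oppr0 mul0r; have := hlow q0 Qq0; rewrite B0 mul0r oppr0; done.
  have Bp : 0 < B by rewrite lt_neqAle eq_sym Bpos hB0.
  have : - Gap z H Q / B <= vi_dist z Q.
    apply: lb_le_inf; first by exists (enorm (z - q0)), q0.
    move=> r [u Qu <-]; rewrite ler_pdivrMr //.
    have := hlow u Qu; lra.
  rewrite ler_pdivrMr // => hh; lra.
apply: ge_sup; first by exists (dot (H q0) (z - q0)), q0.
by move=> r [u Qu <-]; apply: main.
Qed.
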